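(* In the setting below, an element $x\in V$ is invertible in the Jordan algebra $V$ if and only if $h\in[x,\mathfrak g_{-1}(h)]$.
   Context: $\mathfrak g$ is a hermitian simple real Lie algebra, $\theta$ a Cartan involution, $\mathfrak g=\mathfrak k\oplus\mathfrak p$, $h\in\mathfrak p$ an Euler element (non-zero, $\operatorname{ad}h$ diagonalizable with eigenvalues in $\{-1,0,1\}$), $\mathfrak g_\lambda(h)=\ker(\operatorname{ad}h-\lambda)$. Choose $e\in V:=\mathfrak g_1(h)$ with $[e,\theta(e)]=-2h$; then $x*y:=-\tfrac12[[x,\theta(e)],y]$ makes $V$ a euclidean Jordan algebra with unit $e$; invertibility refers to this Jordan algebra. *)

(* Defs.v *)
(* A finite-dimensional real Lie algebra is modelled on the
   carrier 'rV[R]_n (R : realType, n = dim g) with a bracket [br]. *)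
From HB Require Import structures.
From mathcomp Require Import all_boot all_order all_algebra.
From mathcomp Require Import reals.
Set Implicit Arguments. Unset Strict Implicit. Unset Printing Implicit Defensive.
Import Order.TTheory GRing.Theory Num.Theory.
Local Open Scope ring_scope.

Section LieDefs.
Variables (R : realType) (n : nat).
Notation g := 'rV[R]_n.
Variable br : g -> g -> g.

Definition is_lie_bracket : Prop :=
  [/\ (forall (a : R) (x y z : g), br (a *: x + y) z = a *: br x z + br y z),
      (forall (a : R) (x y z : g), br z (a *: x + y) = a *: br z x + br z y),
      (forall x : g, br x x = 0) &
      (forall x y z : g, br x (br y z) + br y (br z x) + br z (br x y) = 0)].

(* ideals, given as row spaces of n x n matrices *)
Definition is_ideal (I : 'M[R]_n) : Prop :=
  forall x y : g, (y <= I)%MS -> (br x y <= I)%MS.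

Definition is_simple : Prop :=
  (exists x y : g, br x y != 0) /\
  (forall I : 'M[R]_n, is_ideal I -> \rank I = 0%N \/ \rank I = n).

Definition killing (x y : g) : R :=
  \tr (lin1_mx (fun z : g => br x (br y z))).

Definition is_cartan_involution (theta : g -> g) : Prop :=
  [/\ (forall (a : R) (x y : g), theta (a *: x + y) = a *: theta x + theta y),
      (forall x y : g, theta (br x y) = br (theta x) (theta y)),
      (forall x : g, theta (theta x) = x) &
      (forall x : g, x != 0 -> 0 < - killing x (theta x))].

(* hermitian simple: simple, and the centre of k = Fix(theta) is nonzero *)
Definition is_hermitian (theta : g -> g) : Prop :=
  is_simple /\
  exists z : g, [/\ z != 0, theta z = z &
                    forall x : g, theta x = x -> br z x = 0].

Definition eigsp (h : g) (lambda : R) (x : g) : Prop := br h x = lambda *: x.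

Definition is_euler (h : g) : Prop :=
  h != 0 /\
  forall x : g, exists xm x0 xp : g,
    [/\ eigsp h (-1) xm, eigsp h 0 x0, eigsp h 1 xp & x = xm + x0 + xp].

Definition jprod (theta : g -> g) (e x y : g) : g :=
  - (2%:R^-1) *: br (br x (theta e)) y.

Definition jinvertible (theta : g -> g) (h e x : g) : Prop :=
  exists y : g, [/\ eigsp h 1 y,
                    jprod theta e x y = e &
                    jprod theta e (jprod theta e x x) y = x].
End LieDefs.

(* Main.v *)
Require Import Defs.
From HB Require Import structures.
From mathcomp Require Import all_boot all_order all_algebra.
From mathcomp Require Import reals.
From mathcomp Require Import ring lra.
Import Order.TTheory GRing.Theory Num.Theory.
Local Open Scope ring_scope.
Set Implicit Arguments. Unset Strict Implicit. Unset Printing Implicit Defensive.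

Section Lie.
Variables (R : realType) (n : nat) (br : 'rV[R]_n -> 'rV[R]_n -> 'rV[R]_n).
Hypothesis HL1 : forall (a : R) (x y z : 'rV[R]_n), br (a *: x + y) z = a *: br x z + br y z.
Hypothesis HL2 : forall (a : R) (x y z : 'rV[R]_n), br z (a *: x + y) = a *: br z x + br z y.
Hypothesis HL3 : forall x : 'rV[R]_n, br x x = 0.
Hypothesis HL4 : forall x y z : 'rV[R]_n, br x (br y z) + br y (br z x) + br z (br x y) = 0.

Lemma rowE {u v : 'rV[R]_n} : u = v -> forall j, u 0 j = v 0 j.
Proof. by move=> ->. Qed.

Lemma br0l z : br 0 z = 0.
Proof.
move: HL1 => H1; have := H1 1 0 0 z; rewrite !scale1r addr0 => E.
by move/(congr1 (fun t => t - br 0 z)): E; rewrite subrr addrK => <-.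
Qed.
Lemma br0r z : br z 0 = 0.
Proof.
move: HL2 => H1; have := H1 1 0 0 z; rewrite !scale1r addr0 => E.
by move/(congr1 (fun t => t - br z 0)): E; rewrite subrr addrK => <-.
Qed.
Lemma brDl x y z : br (x + y) z = br x z + br y z.
Proof. by move: HL1 => H1; rewrite -{1}[x]scale1r H1 scale1r. Qed.
Lemma brDr x y z : br z (x + y) = br z x + br z y.
Proof. by move: HL2 => H1; rewrite -{1}[x]scale1r H1 scale1r. Qed.
Lemma brZl a x z : br (a *: x) z = a *: br x z.
Proof. by move: HL1 => H1; rewrite -[a *: x]addr0 H1 br0l addr0. Qed.
Lemma brZr a x z : br z (a *: x) = a *: br z x.
Proof. by move: HL2 => H1; rewrite -[a *: x]addr0 H1 br0r addr0. Qed.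
Lemma brNl x z : br (- x) z = - br x z.
Proof. by rewrite -scaleN1r brZl scaleN1r. Qed.
Lemma brNr x z : br z (- x) = - br z x.
Proof. by rewrite -scaleN1r brZr scaleN1r. Qed.
Lemma brBl x y z : br (x - y) z = br x z - br y z.
Proof. by rewrite brDl brNl. Qed.
Lemma brBr x y z : br z (x - y) = br z x - br z y.
Proof. by rewrite brDr brNr. Qed.
Lemma brC x y : br x y = - br y x.
Proof.
move: HL3 => H3; have := H3 (x + y).
rewrite brDl !brDr !H3 add0r addr0 => /eqP; rewrite addr_eq0 => /eqP //.
Qed.
Lemma jacD a b c : br a (br b c) = br (br a b) c + br b (br a c).
Proof.
have E := HL4 a b c.
have F1 : br b (br c a) = - br b (br a c) by rewrite (brC c a) brNr.
have F2 : br c (br a b) = - br (br a b) c by rewrite brC.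
apply/rowP => j; move: (rowE E j) (rowE F1 j) (rowE F2 j); rewrite !mxE; lra.
Qed.

Ltac ent := repeat match goal with x := _ |- _ => subst x end;
  let j := fresh "j" in apply/rowP => j;
  repeat match goal with H : @eq (matrix _ _ _) _ _ |- _ => move: (rowE H j); clear H end;
  rewrite ?mxE; lra.

Variable h : 'rV[R]_n.
Hypothesis Hdec : forall x : 'rV[R]_n, exists xm x0 xp : 'rV[R]_n,
    [/\ eigsp br h (-1) xm, eigsp br h 0 x0, eigsp br h 1 xp & x = xm + x0 + xp].

Lemma eig_br l m a b : eigsp br h l a -> eigsp br h m b -> eigsp br h (l + m) (br a b).
Proof. by rewrite /eigsp => Ha Hb; rewrite jacD Ha Hb brZl brZr scalerDl. Qed.

Lemma eig_zero l w : eigsp br h l w -> l * (1 - l * l) != 0 -> w = 0.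
Proof.
move=> Hw Hl; have [xm [x0 [xp [Hm H0 Hp Hx]]]] := Hdec w.
rewrite /eigsp in Hw Hm H0 Hp.
have E1 : l *: w = - xm + xp.
  by rewrite -Hw Hx !brDr Hm H0 Hp scaleN1r scale0r scale1r addr0.
have E2 : (l * l) *: w = xm + xp.
  by have := congr1 (br h) E1; rewrite brZr Hw scalerA brDr brNr Hm Hp scaleN1r scale1r opprK.
have E3 : x0 = (1 - l * l) *: w.
  by rewrite scalerBl scale1r E2; ent.
have : ((1 - l * l) * l) *: w = 0.
  by move: H0; rewrite scale0r E3 brZr Hw scalerA.
move/eqP; rewrite scaler_eq0 => /orP [|/eqP //].
by rewrite mulrC (negbTE Hl).
Qed.

Lemma deg11 a b : eigsp br h 1 a -> eigsp br h 1 b -> br a b = 0.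
Proof. move=> Ha Hb; apply: (eig_zero (eig_br Ha Hb)); apply/eqP; lra. Qed.
Lemma degmm a b : eigsp br h (-1) a -> eigsp br h (-1) b -> br a b = 0.
Proof. move=> Ha Hb; apply: (eig_zero (eig_br Ha Hb)); apply/eqP; lra. Qed.
Lemma d1m a b : eigsp br h 1 a -> eigsp br h (-1) b -> eigsp br h 0 (br a b).
Proof. by move=> Ha Hb; have := eig_br Ha Hb; rewrite addrN. Qed.
Lemma dm1 a b : eigsp br h (-1) a -> eigsp br h 1 b -> eigsp br h 0 (br a b).
Proof. by move=> Ha Hb; have := eig_br Ha Hb; rewrite addNr. Qed.
Lemma d01 a b : eigsp br h 0 a -> eigsp br h 1 b -> eigsp br h 1 (br a b).
Proof. by move=> Ha Hb; have := eig_br Ha Hb; rewrite add0r. Qed.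
Lemma d10 a b : eigsp br h 1 a -> eigsp br h 0 b -> eigsp br h 1 (br a b).
Proof. by move=> Ha Hb; have := eig_br Ha Hb; rewrite addr0. Qed.
Lemma d0m a b : eigsp br h 0 a -> eigsp br h (-1) b -> eigsp br h (-1) (br a b).
Proof. by move=> Ha Hb; have := eig_br Ha Hb; rewrite add0r. Qed.
Lemma dm0 a b : eigsp br h (-1) a -> eigsp br h 0 b -> eigsp br h (-1) (br a b).
Proof. by move=> Ha Hb; have := eig_br Ha Hb; rewrite addr0. Qed.
Lemma d00 a b : eigsp br h 0 a -> eigsp br h 0 b -> eigsp br h 0 (br a b).
Proof. by move=> Ha Hb; have := eig_br Ha Hb; rewrite addr0. Qed.
Lemma eigD l a b : eigsp br h l a -> eigsp br h l b -> eigsp br h l (a + b).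
Proof. by rewrite /eigsp => Ha Hb; rewrite brDr Ha Hb scalerDr. Qed.
Lemma eigZ l c a : eigsp br h l a -> eigsp br h l (c *: a).
Proof. by rewrite /eigsp => Ha; rewrite brZr Ha !scalerA mulrC. Qed.
Lemma eigN l a : eigsp br h l a -> eigsp br h l (- a).
Proof. by rewrite /eigsp => Ha; rewrite brNr Ha scalerN. Qed.
Lemma eigB l a b : eigsp br h l a -> eigsp br h l b -> eigsp br h l (a - b).
Proof. by move=> Ha Hb; apply: eigD => //; apply: eigN. Qed.
Lemma eigh : eigsp br h 0 h.
Proof. by rewrite /eigsp HL3 scale0r. Qed.
Lemma eig0E a : eigsp br h 0 a -> br h a = 0.
Proof. by rewrite /eigsp scale0r. Qed.
Lemma eig1E a : eigsp br h 1 a -> br h a = a.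
Proof. by rewrite /eigsp scale1r. Qed.
Lemma eigmE a : eigsp br h (-1) a -> br h a = - a.
Proof. by rewrite /eigsp scaleN1r. Qed.

Lemma pw a u w : eigsp br h 1 a -> eigsp br h (-1) u -> eigsp br h (-1) w ->
  br (br a u) w = br (br a w) u.
Proof.
move=> Ha Hu Hw; have J := jacD a u w.
rewrite (degmm Hu Hw) br0r in J.
have C : br u (br a w) = - br (br a w) u by rewrite brC.
ent.
Qed.

Lemma sym11 a b u : eigsp br h 1 a -> eigsp br h 1 b -> eigsp br h (-1) u ->
  br (br a u) b = br (br b u) a.
Proof.
move=> Ha Hb Hu; have J := jacD b a u.
rewrite (deg11 Hb Ha) br0l in J.
have C1 : br (br a u) b = - br b (br a u) by rewrite brC.
have C2 : br (br b u) a = - br a (br b u) by rewrite brC.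
ent.
Qed.

Lemma sym3 a u w : eigsp br h 1 a -> eigsp br h (-1) u -> eigsp br h (-1) w ->
  br (br a (br a u)) (br a w) = - br (br a u) (br a (br a w)).
Proof.
move=> Ha Hu Hw.
have Hp := d1m Ha Hu; have Hq := d1m Ha Hw.
have Hap := d10 Ha Hp; have Hs := d10 Ha Hq.
have K1 : br (br a u) w + br u (br a w) = 0.
  by have J := jacD a u w; rewrite (degmm Hu Hw) br0r in J; ent.
have K1' := congr1 (br a) K1; rewrite brDr br0r in K1'.
have T2 := jacD a (br a u) w.
have T3 := jacD a u (br a w).
have K2 : br (br a (br a u)) w + 2%:R *: br (br a u) (br a w) + br u (br a (br a w)) = 0.
  by ent.
have K2' := congr1 (br a) K2; rewrite !brDr brZr br0r in K2'.
have T4 := jacD a (br a (br a u)) w; rewrite (deg11 Ha Hap) br0l in T4.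
have T5 := jacD a (br a u) (br a w).
have T6 := jacD a u (br a (br a w)); rewrite (deg11 Ha Hs) br0r in T6.
ent.
Qed.

Lemma JPa a u w : eigsp br h 1 a -> eigsp br h (-1) u -> eigsp br h (-1) w ->
  br (br a u) (br a (br a w)) = br a (br (br (br a u) a) w).
Proof.
move=> Ha Hu Hw.
have Hp := d1m Ha Hu; have Hq := d1m Ha Hw.
have Hap := d10 Ha Hp; have Hs := d10 Ha Hq.
have S := sym3 Ha Hu Hw.
have T1 := jacD (br a u) a w.
have T2 : br (br a u) w = br (br a w) u by apply: pw.
have T2' := congr1 (br a) T2.
have T2'' := congr1 (br a) T2'.
have T3 := jacD a (br a u) (br a w).
have T4 := jacD a (br a w) u.
have T4' := congr1 (br a) T4; rewrite brDr in T4'.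
have T6 := jacD a (br a (br a w)) u; rewrite (deg11 Ha Hs) br0l in T6.
have T7 := jacD a (br a w) (br a u).
have C1 : br (br a u) a = - br a (br a u) by rewrite brC.
have C1' := congr1 (fun t => br t w) C1; rewrite /= brNl in C1'.
have C1'' := congr1 (br a) C1'; rewrite brNr in C1''.
have C2 : br (br a w) (br a (br a u)) = - br (br a (br a u)) (br a w) by rewrite brC.
have C3 : br (br a (br a w)) (br a u) = - br (br a u) (br a (br a w)) by rewrite brC.
have C4 : br (br a w) (br a u) = - br (br a u) (br a w) by rewrite brC.
have C4' := congr1 (br a) C4; rewrite brNr in C4'.
have T1' := congr1 (br a) T1; rewrite brDr in T1'.
ent.
Qed.

Lemma L1 a v w : eigsp br h 1 a -> eigsp br h (-1) v -> eigsp br h (-1) w ->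
  br a (br (br a (br a v)) w) = br a (br a (br (br a w) v)).
Proof.
move=> Ha Hv Hw.
have Hp := d1m Ha Hv; have Hq := d1m Ha Hw.
have Hb := d01 Hp Ha.
have X := JPa Ha Hv Hw.
have J1 := jacD (br a v) a (br a w).
have J2 := jacD (br a v) a w.
have J2' := congr1 (br a) J2; rewrite brDr in J2'.
have P : br (br a v) w = br (br a w) v by apply: pw.
have P' := congr1 (br a) (congr1 (br a) P).
have J3 := jacD a (br (br a v) a) w; rewrite (deg11 Ha Hb) br0l in J3.
have C1 : br (br a v) a = - br a (br a v) by rewrite brC.
have C1' := congr1 (fun t => br a (br t w)) C1; rewrite /= brNl brNr in C1'.
ent.
Qed.

Lemma L2 a u w : eigsp br h 1 a -> eigsp br h (-1) u -> eigsp br h (-1) w ->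
  br (br a u) (br a (br a w)) = - br a (br a (br (br a w) u)).
Proof.
move=> Ha Hu Hw.
have X := JPa Ha Hu Hw.
have Y := L1 Ha Hu Hw.
have C1 : br (br a u) a = - br a (br a u) by rewrite brC.
have C1' := congr1 (fun t => br a (br t w)) C1; rewrite /= brNl brNr in C1'.
ent.
Qed.

Lemma II a v t : eigsp br h 1 a -> eigsp br h (-1) v -> eigsp br h (-1) t ->
  let p := br a v in let q := br a t in let b := br a p in
  br b (br b t) = br a (br a (br (br a (br p t)) v - br q (br p v) + br (br a (br q v)) v)).
Proof.
move=> Ha Hv Ht p q b.
have Hp : eigsp br h 0 p by apply: d1m.
have Hq : eigsp br h 0 q by apply: d1m.
have Hb : eigsp br h 1 b by apply: d10.
have Hw1 : eigsp br h (-1) (br p t) by apply: d0m.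
have Hm : eigsp br h (-1) (br q v) by apply: d0m.
have Hr : eigsp br h (-1) (br p v) by apply: d0m.
have T1 := jacD a p t.
have T1' := congr1 (br b) T1; rewrite brDr in T1'.
have T2 := jacD b a (br p t); rewrite (deg11 Hb Ha) br0l in T2.
have T2' := L1 Ha Hv Hw1.
have T3 := jacD b p q.
have T4 := jacD b a t; rewrite (deg11 Hb Ha) br0l add0r in T4.
have T4' := L1 Ha Hv Ht.
have T4'' := congr1 (br p) T4.
have T4''' := L2 Ha Hv Hm.
have T4c := congr1 (br p) T4'.
have T5 := L2 Ha Hv Hv.
have C5 : br b p = - br p b by rewrite brC.
have Hd : br b p = br a (br a (br p v)) by rewrite C5 T5 opprK.
have T6 := jacD (br a (br a (br p v))) a t.
have Hd1 : eigsp br h 1 (br a (br a (br p v))) by apply: d10 => //; apply: d1m.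
rewrite (deg11 Hd1 Ha) br0l in T6.
have T6' := L1 Ha Hr Ht.
have Hd' := congr1 (fun s => br s q) Hd.
rewrite !brDr ?brNr.
ent.
Qed.

Variables e f : 'rV[R]_n.
Hypothesis He : eigsp br h 1 e.
Hypothesis Hf : eigsp br h (-1) f.
Hypothesis Hef : br e f = 2%:R *: h.

Lemma symE a : eigsp br h 1 a -> br (br a f) e = 2%:R *: a.
Proof. by move=> Ha; rewrite (sym11 Ha He Hf) Hef brZl eig1E. Qed.

Lemma sl2a a : eigsp br h 1 a -> br e (br f a) = 2%:R *: a.
Proof. by move=> Ha; rewrite jacD Hef brZl (deg11 He Ha) br0r addr0 eig1E. Qed.

Lemma sl2b u : eigsp br h (-1) u -> br f (br e u) = 2%:R *: u.
Proof.
move=> Hu; rewrite jacD (degmm Hf Hu) br0r addr0 (brC f e) Hef brNl brZl eigmE //.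
by rewrite scalerN opprK.
Qed.

Lemma sl2c a : eigsp br h 1 a -> br e (br e (br f (br f a))) = 4%:R *: a.
Proof.
move=> Ha; have Ht : eigsp br h 0 (br f a) by apply: dm1.
rewrite (jacD e f (br f a)) Hef brZl (eig0E Ht) scaler0 add0r (sl2a Ha) !brZr (sl2a Ha) scalerA.
by congr (_ *: _); rewrite -natrM.
Qed.

Lemma sl2d u : eigsp br h (-1) u -> br f (br f (br e (br e u))) = 4%:R *: u.
Proof.
move=> Hu; have Ht : eigsp br h 0 (br e u) by apply: d1m.
rewrite (jacD f e (br e u)) (brC f e) Hef brNl brZl (eig0E Ht) scaler0 oppr0 add0r (sl2b Hu) !brZr (sl2b Hu) scalerA.
by congr (_ *: _); rewrite -natrM.
Qed.

Lemma S1 x z : eigsp br h 1 x -> eigsp br h 1 z ->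
  br (br x f) z = 2%:R *: e -> br (br (br (br x f) x) f) z = 4%:R *: x ->
  br x (br x (br (br z f) (br (br z f) f))) = - (8%:R *: e).
Proof.
move=> Hx Hz H1 H2.
have HA : eigsp br h 0 (br x f) by apply: d1m.
have HB : eigsp br h 0 (br z f) by apply: d1m.
have HX2 : eigsp br h 1 (br (br x f) x) by apply: d01.
have SB : br (br z f) x = 2%:R *: e by rewrite (sym11 Hz Hx Hf).
have ExB : br x (br z f) = - (2%:R *: e) by rewrite brC SB.
have EBh : br (br z f) h = 0 by rewrite brC eig0E // oppr0.
have EAh : br (br x f) h = 0 by rewrite brC eig0E // oppr0.
have EeB : br e (br z f) = - (2%:R *: z) by rewrite brC symE.
have EeA : br e (br x f) = - (2%:R *: x) by rewrite brC symE.
have EeBf : br e (br (br z f) f) = - (2%:R *: br z f).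
  by rewrite jacD EeB Hef brZr EBh scaler0 addr0 brNl brZl.
have ExBf : br x (br (br z f) f) = - (4%:R *: h) + br (br z f) (br x f).
  rewrite jacD ExB brNl brZl Hef scalerA -natrM; congr (_ + _).
have F1 : br x (br (br z f) (br (br z f) f)) = 4%:R *: br z f + br (br z f) (br (br z f) (br x f)).
  rewrite jacD ExB ExBf brNl brZl EeBf brDr brNr brZr EBh scaler0 oppr0 add0r.
  by rewrite scalerN opprK scalerA -natrM.
have EzA : br z (br x f) = - (2%:R *: e) by rewrite brC H1.
have EeBA : br e (br (br z f) (br x f)) = 0.
  rewrite jacD EeB EeA brNl brZl EzA brNr brZr SB; ent.
have EBX2 : br (br z f) (br (br x f) x) = 4%:R *: x by rewrite (sym11 Hz HX2 Hf).
have ExBA : br x (br (br z f) (br x f)) = 0.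
  rewrite jacD ExB brNl brZl EeA (brC x (br x f)) brNr EBX2; ent.
have F2 : br x (br (br z f) (br (br z f) (br x f))) = 0.
  by rewrite jacD ExB brNl brZl EeBA ExBA br0r scaler0 oppr0 addr0.
rewrite F1 brDr F2 addr0 brZr ExB scalerN scalerA -natrM.
by [].
Qed.

Lemma P1 x y : eigsp br h 1 x -> eigsp br h (-1) y -> br x y = h ->
  br (br x f) (br e (br e y)) = - (2%:R *: e).
Proof.
move=> Hx Hy Hxy.
have HA : eigsp br h 0 (br x f) by apply: d1m.
have EAe := symE Hx.
have EAy : br (br x f) y = - f.
  have J := jacD x f y; rewrite (degmm Hf Hy) br0r Hxy in J.
  have C : br f h = f by rewrite brC (eigmE Hf) opprK.
  ent.
have J1 : br (br x f) (br e y) = 0.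
  by rewrite jacD EAe brZl Hxy EAy brNr Hef subrr.
have J2 : br x (br e y) = - e.
  by rewrite jacD (deg11 Hx He) br0l add0r Hxy brC eig1E.
by rewrite jacD J1 br0r addr0 EAe brZl J2 scalerN.
Qed.

Lemma P2 x y : eigsp br h 1 x -> eigsp br h (-1) y -> br x y = h ->
  br (br (br (br x f) x) f) (br e (br e y)) = - (4%:R *: x).
Proof.
move=> Hx Hy Hxy.
have HA : eigsp br h 0 (br x f) by apply: d1m.
have HX2 : eigsp br h 1 (br (br x f) x) by apply: d01.
have EAy : br (br x f) y = - f.
  have J := jacD x f y; rewrite (degmm Hf Hy) br0r Hxy in J.
  have C : br f h = f by rewrite brC (eigmE Hf) opprK.
  ent.
have EAh : br (br x f) h = 0 by rewrite brC eig0E // oppr0.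
have EX2y : br (br (br x f) x) y = br x f.
  have J := jacD (br x f) x y; rewrite Hxy EAh EAy brNr in J.
  ent.
have EA2y : br (br (br (br x f) x) f) y = br (br x f) f.
  have J := jacD (br (br x f) x) f y; rewrite (degmm Hf Hy) br0r EX2y in J.
  have C : br f (br x f) = - br (br x f) f by rewrite brC.
  ent.
have EeA : br e (br x f) = - (2%:R *: x) by rewrite brC symE.
have EeAf : br e (br (br x f) f) = - (2%:R *: br x f).
  by rewrite jacD EeA Hef brZr EAh scaler0 addr0 brNl brZl.
have J1 : br (br (br (br x f) x) f) (br e y) = 0.
  rewrite jacD (symE HX2) brZl EX2y EA2y EeAf; ent.
have J2 : br (br (br x f) x) (br e y) = - (2%:R *: x).
  by rewrite jacD (deg11 HX2 He) br0l add0r EX2y EeA.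
rewrite jacD J1 br0r addr0 (symE HX2) brZl J2 scalerN scalerA -natrM.
by [].
Qed.

Lemma surj x v1 : eigsp br h 1 x -> eigsp br h (-1) v1 -> br x (br x v1) = e ->
  forall s, eigsp br h 1 s -> exists v, eigsp br h (-1) v /\ br x (br x v) = s.
Proof.
move=> Hx Hv1 Hxv s Hs.
have Ht : eigsp br h (-1) (br f (br f s)) by apply: dm0 => //; apply: dm1.
have K := II Hx Hv1 Ht; rewrite /= Hxv (sl2c Hs) in K.
set V := (X in br x (br x X)) in K.
have HV : eigsp br h (-1) V.
  have Hp : eigsp br h 0 (br x v1) by apply: d1m.
  have Hq : eigsp br h 0 (br x (br f (br f s))) by apply: d1m.
  apply: eigD; first apply: eigB.
  - by apply: d0m => //; apply: d1m => //; apply: d0m.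
  - by apply: d0m => //; apply: d0m.
  - by apply: d0m => //; apply: d1m => //; apply: d0m.
exists ((4%:R)^-1 *: V); split; first exact: eigZ.
rewrite !brZr -K scalerA mulVf ?scale1r //.
by rewrite pnatr_eq0.
Qed.

Lemma lin1_ext (F G : 'rV[R]_n -> 'rV[R]_n) : F =1 G -> lin1_mx F = lin1_mx G.
Proof. by move=> E; apply/matrixP => i j; rewrite !mxE E. Qed.
Lemma lin1_B (F G : 'rV[R]_n -> 'rV[R]_n) :
  lin1_mx (fun z => F z - G z) = lin1_mx F - lin1_mx G.
Proof. by apply/matrixP => i j; rewrite !mxE. Qed.
Lemma lin1_D (F G : 'rV[R]_n -> 'rV[R]_n) :
  lin1_mx (fun z => F z + G z) = lin1_mx F + lin1_mx G.
Proof. by apply/matrixP => i j; rewrite !mxE. Qed.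
Lemma lin1_Z c (F : 'rV[R]_n -> 'rV[R]_n) :
  lin1_mx (fun z => c *: F z) = c *: lin1_mx F.
Proof. by apply/matrixP => i j; rewrite !mxE. Qed.
Lemma lin1_0 : lin1_mx (fun z : 'rV[R]_n => (0 : 'rV[R]_n)) = 0.
Proof. by apply/matrixP => i j; rewrite !mxE. Qed.

Lemma lin1_comp (F G : 'rV[R]_n -> 'rV[R]_n) :
  (forall a u v, F (a *: u + v) = a *: F u + F v) ->
  lin1_mx (fun z => F (G z)) = lin1_mx G *m lin1_mx F.
Proof.
move=> HF.
have F0 : F 0 = 0.
  have := HF 1 0 0; rewrite !scale1r addr0 => E.
  by move/(congr1 (fun t => t - F 0)): E; rewrite subrr addrK => <-.
have FD : forall u v, F (u + v) = F u + F v by move=> u v; rewrite -{1}[u]scale1r HF scale1r.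
have FZ : forall a u, F (a *: u) = a *: F u by move=> a u; rewrite -[a *: u]addr0 HF F0 addr0.
apply/matrixP => i j; rewrite !mxE.
rewrite {1}(row_sum_delta (G 'e_i)) (big_morph F FD F0) summxE.
by apply: eq_bigr => k _; rewrite FZ !mxE.
Qed.

Lemma killingD c u v : killing br c (u + v) = killing br c u + killing br c v.
Proof.
rewrite /killing -mxtraceD -lin1_D; congr (\tr _); apply: lin1_ext => z.
by rewrite brDl brDr.
Qed.
Lemma killingZ c a u : killing br c (a *: u) = a * killing br c u.
Proof.
rewrite /killing -mxtraceZ -lin1_Z; congr (\tr _); apply: lin1_ext => z.
by rewrite brZl brZr.
Qed.
Lemma killing0 u : killing br 0 u = 0.
Proof.
rewrite /killing (@lin1_ext _ (fun z => 0)) ?lin1_0 ?mxtrace0 // => z.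
by rewrite br0l.
Qed.

Lemma killing_inv c a b : killing br c (br a b) = killing br (br c a) b.
Proof.
rewrite /killing.
have E1 : lin1_mx (fun z => br c (br (br a b) z)) =
   lin1_mx (fun z => br c (br a (br b z))) - lin1_mx (fun z => br c (br b (br a z))).
  rewrite -lin1_B; apply: lin1_ext => z; rewrite -brBr; congr (br c _).
  by rewrite (jacD a b z) addrK.
have E2 : lin1_mx (fun z => br (br c a) (br b z)) =
   lin1_mx (fun z => br c (br a (br b z))) - lin1_mx (fun z => br a (br c (br b z))).
  rewrite -lin1_B; apply: lin1_ext => z.
  by rewrite (jacD c a (br b z)) addrK.
have Lc : forall d, (forall a0 u v, br d (a0 *: u + v) = a0 *: br d u + br d v).
  by move=> d a0 u v; exact: HL2.
have T : \tr (lin1_mx (fun z => br c (br b (br a z)))) = \tr (lin1_mx (fun z => br a (br c (br b z)))).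
  rewrite (lin1_comp (fun z => br b (br a z)) (Lc c)) (lin1_comp (br a) (Lc b)).
  rewrite (lin1_comp (fun z => br c (br b z)) (Lc a)) (lin1_comp (br b) (Lc c)).
  by rewrite -!mulmxA mxtrace_mulC mulmxA.
rewrite E1 E2 !raddfB; congr (_ - _); exact: T.
Qed.

Lemma main (theta : 'rV[R]_n -> 'rV[R]_n) :
  (forall (a : R) (u v : 'rV[R]_n), theta (a *: u + v) = a *: theta u + theta v) ->
  (forall u v, theta (br u v) = br (theta u) (theta v)) ->
  (forall u : 'rV[R]_n, u != 0 -> 0 < - killing br u (theta u)) ->
  theta h = - h -> theta e = - f -> br e (theta e) = - (2%:R *: h) ->
  forall x, eigsp br h 1 x ->
   (jinvertible br theta h e x <-> exists y, eigsp br h (-1) y /\ br x y = h).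
Proof.
move=> Tl Th Tpos Hth Hte Hee x Hx.
have T0 : theta 0 = 0.
  have := Tl 1 0 0; rewrite !scale1r addr0 => E.
  by move/(congr1 (fun t => t - theta 0)): E; rewrite subrr addrK => <-.
have TD : forall u v, theta (u + v) = theta u + theta v.
  by move=> u v; rewrite -{1}[u]scale1r Tl scale1r.
have TZ : forall a u, theta (a *: u) = a *: theta u.
  by move=> a u; rewrite -[a *: u]addr0 Tl T0 addr0.
have TN : forall u, theta (- u) = - theta u.
  by move=> u; rewrite -scaleN1r TZ scaleN1r.
have TB : forall u v, theta (u - v) = theta u - theta v.
  by move=> u v; rewrite TD TN.
have Teig : forall l a, eigsp br h l a -> eigsp br h (- l) (theta a).
  move=> l a; rewrite /eigsp => Ha; have := Th h a; rewrite Ha TZ Hth brNl => E.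
  by rewrite scaleNr E opprK.
have jE : forall a b, jprod br theta e a b = 2%:R^-1 *: br (br a f) b.
  by move=> a b; rewrite /jprod Hte brNr brNl; ent.
split.
- case=> z [Hz H1 H2].
  rewrite !jE !brZl in H2; rewrite jE in H1.
  have H1' : br (br x f) z = 2%:R *: e by ent.
  have H2' : br (br (br (br x f) x) f) z = 4%:R *: x by ent.
  have HB : eigsp br h 0 (br z f) by apply: d1m.
  pose v1 := - (8%:R^-1) *: br (br z f) (br (br z f) f).
  have Hv1 : eigsp br h (-1) v1 by apply: eigZ; apply: d0m => //; apply: d0m.
  have Hxv : br x (br x v1) = e.
    by rewrite /v1 !brZr (S1 Hx Hz H1' H2'); ent.
  have SU := surj Hx Hv1 Hxv.
  have [y [Hy Hxy]] := SU (- x) (eigN Hx).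
  exists y; split => //.
  pose c := br x y - h.
  have Hc0 : eigsp br h 0 c by apply: eigB; [apply: d1m | apply: eigh].
  have Kc1 : forall s, eigsp br h 1 s -> br c s = 0.
    move=> s Hs; have [w [Hw Hws]] := SU s Hs.
    have J := JPa Hx Hy Hw.
    have C : br (br x y) x = x by rewrite brC Hxy opprK.
    rewrite C Hws in J.
    by rewrite /c brBl J eig1E // subrr.
  have Kce : br c e = 0 by apply: Kc1.
  have Kcf : br c f = 0.
    have Hd : eigsp br h (-1) (br f c) by apply: dm0.
    have E : br e (br f c) = 0.
      by rewrite jacD Hef brZl eig0E // scaler0 add0r (brC e c) Kce oppr0 br0r.
    have := sl2b Hd; rewrite E br0r => E2.
    rewrite brC; ent.
  have Kcm : forall u, eigsp br h (-1) u -> br c u = 0.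
    move=> u Hu; have Hs' : eigsp br h 1 (br e (br e u)) by apply: d10 => //; apply: d1m.
    have E4 := sl2d Hu.
    have E5 : br c (br f (br e (br e u))) = 0 by rewrite jacD Kcf br0l add0r Kc1 // br0r.
    have E6 : br c (br f (br f (br e (br e u)))) = 0 by rewrite jacD Kcf br0l add0r E5 br0r.
    rewrite E4 brZr in E6; ent.
  have Hthc : theta c = br (theta x) (theta y) + h by rewrite /c TB Th Hth opprK.
  have Hh : h = - (2%:R^-1) *: br e (theta e) by rewrite Hee; ent.
  have Hk : killing br c (theta c) = 0.
    rewrite Hthc killingD killing_inv (Kcm _ (Teig _ _ Hx)) killing0 add0r.
    by rewrite Hh killingZ killing_inv Kce killing0 mulr0.
  have : c = 0.
    case: (eqVneq c 0) => // Hc; have := Tpos c Hc.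
    by rewrite Hk oppr0 ltxx.
  by move/eqP; rewrite subr_eq0 => /eqP.
- case=> y [Hy Hxy]; exists (- br e (br e y)); split.
  + by apply: eigN; apply: d10 => //; apply: d1m.
  + by rewrite jE brNr (P1 Hx Hy Hxy); ent.
  + by rewrite !jE brNr !brZl (P2 Hx Hy Hxy); ent.
Qed.

Lemma theta_eig (theta : 'rV[R]_n -> 'rV[R]_n) :
  (forall (a : R) (u v : 'rV[R]_n), theta (a *: u + v) = a *: theta u + theta v) ->
  (forall u v, theta (br u v) = br (theta u) (theta v)) ->
  theta h = - h -> forall l a, eigsp br h l a -> eigsp br h (- l) (theta a).
Proof.
move=> Tl Th Hth l a.
have T0 : theta 0 = 0.
  have := Tl 1 0 0; rewrite !scale1r addr0 => E.
  by move/(congr1 (fun t => t - theta 0)): E; rewrite subrr addrK => <-.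
have TZ : forall a u, theta (a *: u) = a *: theta u.
  by move=> b u; rewrite -[b *: u]addr0 Tl T0 addr0.
rewrite /eigsp => Ha; have := Th h a; rewrite Ha TZ Hth brNl => E.
by rewrite scaleNr E opprK.
Qed.
End Lie.

Unset Implicit Arguments.

Theorem lemma5p5 (R : realType) (n : nat) (br : 'rV[R]_n -> 'rV[R]_n -> 'rV[R]_n)
  (theta : 'rV[R]_n -> 'rV[R]_n) (h e : 'rV[R]_n) :
  is_lie_bracket br ->
  is_cartan_involution br theta ->
  is_hermitian br theta ->
  is_euler br h ->
  theta h = - h ->
  eigsp br h 1 e ->
  br e (theta e) = - (2%:R *: h) ->
  forall x : 'rV[R]_n, eigsp br h 1 x ->
    (jinvertible br theta h e x <->
     exists y : 'rV[R]_n, eigsp br h (-1) y /\ br x y = h).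
Proof.
move=> HL HC _ HE Hth He Hee x Hx.
move: HL; rewrite /is_lie_bracket => -[HL1 HL2 HL3 HL4].
move: HC; rewrite /is_cartan_involution => -[Tl Th _ Tpos].
move: HE; rewrite /is_euler => -[_ Hdec].
pose f := - theta e.
have Hte : theta e = - f by rewrite /f opprK.
have Ht := theta_eig HL1 Tl Th Hth He.
have Hf : eigsp br h (-1) f.
  by move: Ht; rewrite /eigsp /f (brNr HL2) => ->; rewrite scalerN.
have Hef : br e f = 2%:R *: h by rewrite /f (brNr HL2) Hee opprK.
exact: (main HL1 HL2 HL3 HL4 Hdec He Hf Hef Tl Th Tpos Hth Hte Hee Hx).
Qed.
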